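(* For every odd prime $p$, writing $m = \frac{p-1}{2}$, $$\sum_{\substack{k_1,k_2,k_3,k_4=0\\ k_1+k_2+k_3+k_4 = p-1}}^{m}\ \prod_{i=1}^4 \binom{m}{k_i}\binom{m+k_i}{k_i} \equiv \sum_{\substack{k_1,k_2,k_3,k_4=0\\ k_1+k_2 = k_3+k_4}}^{m}\ \prod_{i=1}^4 \binom{m}{k_i}\binom{m+k_i}{k_i} \pmod{p^2}.$$
   Context: Both sums run over integers $0 \le k_i \le m$ subject to the indicated linear constraint. *)

(* Defs.v *)
From mathcomp Require Import all_boot.
Set Implicit Arguments. Unset Strict Implicit. Unset Printing Implicit Defensive.

Definition aterm (m k : nat) : nat := 'C(m, k) * 'C(m + k, k).

Definition prod4 (m k1 k2 k3 k4 : nat) : nat :=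
  aterm m k1 * aterm m k2 * aterm m k3 * aterm m k4.

(* Main.v *)
Require Import Defs.
From mathcomp Require Import all_boot all_algebra.
From mathcomp Require Import zify ring.
Import GRing.Theory Num.Theory.

Definition cc (m n : nat) : nat :=
  \sum_(k1 < m.+1) \sum_(k2 < m.+1)
     (if k1 + k2 == n then aterm m k1 * aterm m k2 else 0).

Lemma fact_ndvd p r : prime p -> r < p -> ~~ (p %| r`!).
Proof.
move=> pp; elim: r => [|r IH] lt.
  by rewrite fact0 dvdn1; case: eqP pp => // ->.
rewrite factS Euclid_dvdM // negb_or IH ?andbT; last lia.
by rewrite gtnNdvd //.
Qed.

Section Fp.
Local Open Scope ring_scope.

Lemma binFp (p j r : nat) : prime p -> (j + r < p)%N ->
  ('C(p.-1 - j, r)%:R : 'F_p) = (-1) ^+ r * 'C(j + r, r)%:R.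
Proof.
move=> pp ljr.
have hfact: (r`!%:R : 'F_p) != 0.
  by rewrite -(dvdn_pcharf (pchar_Fp pp)) fact_ndvd //; lia.
apply: (mulIf hfact); rewrite -natrM bin_ffact -mulrA -natrM bin_ffact.
elim: r ljr {hfact} => [|r IH] lt; first by rewrite !ffactn0 expr0 mul1r.
rewrite ffactnSr natrM IH; last lia.
rewrite addnS ffactSS natrM.
have ->: ((p.-1 - j - r)%:R : 'F_p) = - (j + r).+1%:R.
  apply/eqP; rewrite -subr_eq0 opprK -natrD.
  have ->: (p.-1 - j - r + (j + r).+1 = p)%N by have := prime_gt1 pp; lia.
  by rewrite pchar_Fp_0.
rewrite exprS; ring.
Qed.

Lemma asym (p m k : nat) : prime p -> p = m.*2.+1 -> (k <= m)%N ->
  ((aterm m k)%:R : 'F_p) = (-1) ^+ m * (aterm m (m - k))%:R.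
Proof.
move=> pp hp km; rewrite /aterm.
have e1 : 'C(m + k, k) = 'C(p.-1 - (m - k), m).
  rewrite -(bin_sub (leq_addl m k)) addnK; congr 'C(_,_); lia.
have e2 : 'C(m + (m - k), m - k) = 'C(m - k + m, m).
  by rewrite -(bin_sub (leq_addl m (m - k))) addnK addnC.
have e3 : 'C(m, m - k) = 'C(m, k) by rewrite bin_sub.
rewrite e1 e2 e3 !natrM binFp //; last lia.
ring.
Qed.

Lemma csym (p m n : nat) : prime p -> p = m.*2.+1 -> (n <= m.*2)%N ->
  ((cc m n)%:R : 'F_p) = (cc m (m.*2 - n))%:R.
Proof.
move=> pp hp hn; rewrite /cc !natr_sum [in RHS](reindex_inj rev_ord_inj) /=.
apply: eq_bigr => i _; rewrite !natr_sum [in RHS](reindex_inj rev_ord_inj) /=.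
apply: eq_bigr => j _ /=; rewrite !subSS.
have hi := ltn_ord i; have hj := ltn_ord j.
have ->: (m - i + (m - j) == m.*2 - n)%N = (i + j == n)%N.
  by apply/eqP/eqP; lia.
case: ifP => // _.
rewrite (natrM _ (aterm m i)) (natrM _ (aterm m (m - i))) (@asym p m i pp hp) ?(@asym p m j pp hp); try lia.
rewrite mulrACA -exprMn mulrNN mulr1 expr1n mul1r //.
Qed.

End Fp.

Lemma conv (m : nat) (g : nat -> nat) :
  \sum_(k1 < m.+1) \sum_(k2 < m.+1) aterm m k1 * aterm m k2 * g (k1 + k2)
  = \sum_(n < m.*2.+1) cc m n * g n.
Proof.
symmetry.
transitivity (\sum_(n < m.*2.+1) \sum_(k1 < m.+1) \sum_(k2 < m.+1)
   (if k1 + k2 == n then aterm m k1 * aterm m k2 * g (k1 + k2) else 0)).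
  apply: eq_bigr => n _; rewrite /cc big_distrl; apply: eq_bigr => k1 _.
  rewrite big_distrl; apply: eq_bigr => k2 _ /=.
  by case: eqP => [->|]; rewrite ?mul0n.
rewrite exchange_big; apply: eq_bigr => k1 _; rewrite exchange_big.
apply: eq_bigr => k2 _ /=.
have h : k1 + k2 < m.*2.+1 by have := ltn_ord k1; have := ltn_ord k2; lia.
rewrite (bigD1 (Ordinal h)) //= eqxx big1 ?addn0 // => i hi.
case: eqP => // e; move/eqP: hi => hi; exfalso; apply: hi.
by apply: val_inj => /=; rewrite e.
Qed.

Section Int.
Local Open Scope ring_scope.

Lemma final_int (p m : nat) (c : nat -> nat) : odd p ->
  (forall n, (n <= m.*2)%N -> (p%:Z %| ((c n)%:Z - (c (m.*2 - n)%N)%:Z)%R)%Z) ->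
  (\sum_(n < m.*2.+1) c n * c (m.*2 - n) =
   \sum_(n < m.*2.+1) c n * c n %[mod p ^ 2])%N.
Proof.
move=> hodd hc; set N := m.*2.
have hrev : (\sum_(n < N.+1) c (N - n) * c (N - n) = \sum_(n < N.+1) c n * c n)%N.
  rewrite (reindex_inj rev_ord_inj) /=; apply: eq_bigr => i _; rewrite subSS.
  by have ->: (N - (N - i) = i)%N by have := ltn_ord i; lia.
set A := (\sum_(n < N.+1) c n * c (N - n))%N.
set B := (\sum_(n < N.+1) c n * c n)%N.
have eB : B%:Z = \sum_(n < N.+1) (c n)%:Z * (c n)%:Z.
  by rewrite /B -natz natr_sum; apply: eq_bigr => i _; rewrite natrM !natz.
have eA : A%:Z = \sum_(n < N.+1) (c n)%:Z * (c (N - n)%N)%:Z.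
  by rewrite /A -natz natr_sum; apply: eq_bigr => i _; rewrite natrM !natz.
have eR : \sum_(n < N.+1) (c (N - n)%N)%:Z * (c (N - n)%N)%:Z = \sum_(n < N.+1) (c n)%:Z * (c n)%:Z.
  rewrite -eB /B -hrev -natz natr_sum; apply: eq_bigr => i _; by rewrite natrM !natz.
have key : 2 * (B%:Z - A%:Z) =
    \sum_(n < N.+1) ((c n)%:Z - (c (N - n)%N)%:Z) ^+ 2.
  transitivity (\sum_(n < N.+1) (((c n)%:Z * (c n)%:Z + (c (N - n)%N)%:Z * (c (N - n)%N)%:Z)
                      - 2 * ((c n)%:Z * (c (N - n)%N)%:Z))).
    rewrite sumrB big_split -mulr_sumr /= eR eA eB; ring.
  by apply: eq_bigr => i _; ring.
have hd : (p%:Z ^+ 2 %| 2 * (B%:Z - A%:Z))%Z.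
  rewrite key; apply: (big_ind (fun x => (p%:Z ^+ 2 %| x)%Z)) => //; first by move=> x y; apply: rpredD.
  move=> i _; have /dvdzP [q ->] := hc i (ltn_ord i).
  by rewrite exprMn dvdz_mull.
have cop : coprimez (p%:Z ^+ 2) 2.
  by rewrite coprimezE abszX /= coprimeXl // coprimen2.
move: hd; rewrite Gauss_dvdzr // => hd.
apply/eqP; rewrite -eqz_nat -!modz_nat.
have : (A%:Z == B%:Z %[mod (p ^ 2)%N])%Z.
  rewrite eqz_mod_dvd (_ : ((p ^ 2)%N : int) = p%:Z ^+ 2); last by rewrite -[LHS]natz natrX natz.
  by rewrite -opprB rpredN.
done.
Qed.

End Int.

Section C.
Local Open Scope ring_scope.
Lemma cong_int (p x y : nat) : prime p -> (x%:R : 'F_p) = y%:R ->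
  (p%:Z %| x%:Z - y%:Z)%Z.
Proof.
move=> pp; wlog xy : x y / (x <= y)%N.
  move=> W h; case: (leqP x y) => l; first exact: W.
  rewrite -opprB rpredN; apply: W; [exact: ltnW | by symmetry].
move=> h; have : ((y - x)%N%:R : 'F_p) = 0 by rewrite natrB // h subrr.
move/eqP; rewrite -(dvdn_pcharf (pchar_Fp pp)) => hd.
by rewrite -opprB rpredN subzn // dvdzE.
Qed.
End C.

Theorem lemma2p11 (p : nat) (hp : prime p) (hodd : odd p) :
  let m := (p - 1) %/ 2 in
  \sum_(k1 < m.+1) \sum_(k2 < m.+1) \sum_(k3 < m.+1) \sum_(k4 < m.+1)
     (if k1 + k2 + k3 + k4 == p - 1 then prod4 m k1 k2 k3 k4 else 0)
  = \sum_(k1 < m.+1) \sum_(k2 < m.+1) \sum_(k3 < m.+1) \sum_(k4 < m.+1)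
     (if k1 + k2 == k3 + k4 then prod4 m k1 k2 k3 k4 else 0)
  %[mod p ^ 2].
Proof.
move=> m.
have hpm : p = m.*2.+1.
  rewrite /m; have := divn_eq (p - 1) 2; rewrite modn2.
  have := prime_gt1 hp; move: hodd; case: p {hp m} => // p' /= ho _.
  rewrite subn1 /= (negbTE ho) addn0 => e; rewrite -muln2 {1}e //.
rewrite (_ : \sum_(k1 < m.+1) \sum_(k2 < m.+1) \sum_(k3 < m.+1) \sum_(k4 < m.+1)
     (if k1 + k2 + k3 + k4 == p - 1 then prod4 m k1 k2 k3 k4 else 0)
   = \sum_(n < m.*2.+1) cc m n * cc m (m.*2 - n)); last first.
  rewrite -(conv m (fun n => cc m (m.*2 - n))).
  apply: eq_bigr => k1 _; apply: eq_bigr => k2 _ /=.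
  rewrite /cc big_distrr; apply: eq_bigr => k3 _; rewrite big_distrr.
  apply: eq_bigr => k4 _ /=.
  have h1 := ltn_ord k1; have h2 := ltn_ord k2.
  have ->: (k1 + k2 + k3 + k4 == p - 1) = (k3 + k4 == m.*2 - (k1 + k2)).
    by apply/eqP/eqP; lia.
  by case: ifP; rewrite /prod4 ?muln0 // !mulnA.
rewrite (_ : \sum_(k1 < m.+1) \sum_(k2 < m.+1) \sum_(k3 < m.+1) \sum_(k4 < m.+1)
     (if k1 + k2 == k3 + k4 then prod4 m k1 k2 k3 k4 else 0)
   = \sum_(n < m.*2.+1) cc m n * cc m n); last first.
  rewrite -(conv m (fun n => cc m n)).
  apply: eq_bigr => k1 _; apply: eq_bigr => k2 _ /=.
  rewrite /cc big_distrr; apply: eq_bigr => k3 _; rewrite big_distrr.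
  apply: eq_bigr => k4 _ /=.
  by rewrite [k3 + k4 == _]eq_sym; case: ifP; rewrite /prod4 ?muln0 // !mulnA.
apply: final_int => // n hn.
exact: (@cong_int p _ _ hp (@csym p m n hp hpm hn)).
Qed.
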